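(* Let $s=1$, $n=3$, and $p_{ij}=1/6$ for all $i\neq j$. Let $\beta(x)=(1+x)^{-1}$ or $\beta(x)=e^{-x}$. Let $Y(t)$ be the solution of the gradient flow of relative entropy with initial data $y_1(0)=1$, $y_2(0)=0$, $y_3(0)=-1$. Then $Y(t)$ has the form $y_1(t)=X(t)$, $y_2(t)=0$, $y_3(t)=-X(t)$ with $0\le X(t)\le 1$, and there is a constant $C$ such that $\operatorname{diam}Y(t)\le C\,t^{-1/2}$ for all $t>0$; in particular $\operatorname{diam}Y(t)\to0$ as $t\to\infty$.
   Context: Let $\mathcal{P}_n=\{(i,j): i\neq j\}$ and $(p_{ij})$ a symmetric probability distribution on $\mathcal{P}_n$. For $Y=(y_1,\dots,y_n)\in(\mathbb{R}^s)^n$ define $q_{ij}=\beta(|y_i-y_j|^2)/\sum_{k\neq \ell}\beta(|y_k-y_\ell|^2)$. The gradient flow of relative entropy is the ODE system $$\frac{dy_i}{dt}=4\sum_{j\neq i}(p_{ij}-q_{ij})(y_i-y_j)(\log\beta)'(|y_i-y_j|^2),\qquad i=1,\dots,n.$$ $\operatorname{diam}Y=\max_{i,j}|y_i-y_j|$. *)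

(* Defs.v *)
From Stdlib Require Import Reals Lra.
From Coquelicot Require Import Coquelicot.
Open Scope R_scope.

(* Configurations in (R^1)^n are represented as y : nat -> R, using indices 0..n-1. *)

(* sum over ordered pairs (k,l) with k <> l, k,l in {0,...,n-1}; here n >= 1 *)
Definition sum_pairs (n : nat) (f : nat -> nat -> R) : R :=
  sum_f_R0 (fun k => sum_f_R0 (fun l => if Nat.eq_dec k l then 0 else f k l) (n - 1)) (n - 1).

Definition sum_ne (n i : nat) (f : nat -> R) : R :=
  sum_f_R0 (fun j => if Nat.eq_dec i j then 0 else f j) (n - 1).

(* q_ij = beta(|y_i - y_j|^2) / sum_{k<>l} beta(|y_k - y_l|^2)   (s = 1) *)
Definition qij (beta : R -> R) (n : nat) (y : nat -> R) (i j : nat) : R :=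
  beta ((y i - y j) ^ 2) / sum_pairs n (fun k l => beta ((y k - y l) ^ 2)).

Definition dlogbeta (beta : R -> R) (x : R) : R := Derive (fun u => ln (beta u)) x.

Definition flow_rhs (beta : R -> R) (p : nat -> nat -> R) (n : nat)
  (y : nat -> R) (i : nat) : R :=
  4 * sum_ne n i (fun j => (p i j - qij beta n y i j) * (y i - y j)
                             * dlogbeta beta ((y i - y j) ^ 2)).

Definition is_flow_solution (beta : R -> R) (p : nat -> nat -> R) (n : nat)
  (Y : R -> nat -> R) : Prop :=
  forall i, (i < n)%nat ->
    (forall t, 0 < t -> is_derive (fun s => Y s i) t (flow_rhs beta p n (Y t) i)) /\
    filterlim (fun s => Y s i) (at_right 0) (locally (Y 0 i)).

Fixpoint max_upto (f : nat -> R) (m : nat) : R :=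
  match m with
  | O => f O
  | S m' => Rmax (max_upto f m') (f m)
  end.

Definition diam (n : nat) (y : nat -> R) : R :=
  max_upto (fun i => max_upto (fun j => Rabs (y i - y j)) (n - 1)) (n - 1).

(* Main.v *)
Require Import Defs.
From Stdlib Require Import Reals Lra Lia.
From Coquelicot Require Import Coquelicot.
Open Scope R_scope.

Lemma D_eq (f : R -> R) (x l l' : R) : is_derive f x l -> l = l' -> is_derive f x l'.
Proof. intros H ->; exact H. Qed.

Lemma D_plus (f g : R -> R) (x df dg : R) : is_derive f x df -> is_derive g x dg ->
  is_derive (fun t => f t + g t) x (df + dg).
Proof. intros. exact (is_derive_plus f g x df dg H H0). Qed.

Lemma D_mult (f g : R -> R) (x df dg : R) : is_derive f x df -> is_derive g x dg ->
  is_derive (fun t => f t * g t) x (df * g x + f x * dg).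
Proof. intros. exact (is_derive_mult f g x df dg H H0 Rmult_comm). Qed.

Lemma D_comp (f g : R -> R) x df dg : is_derive f (g x) df -> is_derive g x dg ->
  is_derive (fun t => f (g t)) x (dg * df).
Proof. intros. exact (is_derive_comp f g x df dg H H0). Qed.

Lemma D_const (c x : R) : is_derive (fun _ => c) x 0.
Proof. apply (is_derive_const c x). Qed.

Lemma D_id (x : R) : is_derive (fun t => t) x 1.
Proof. apply (is_derive_id x). Qed.

Lemma D_opp (f : R -> R) (x df : R) : is_derive f x df -> is_derive (fun t => - f t) x (- df).
Proof. intros. exact (is_derive_opp f x df H). Qed.

Lemma D_exp (x : R) : is_derive exp x (exp x).
Proof. apply is_derive_exp. Qed.

Lemma D_inv (f : R -> R) (x l : R) : is_derive f x l -> f x <> 0 -> is_derive (fun y => / f y) x (- l / f x ^ 2).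
Proof. apply is_derive_inv. Qed.

Lemma D_cont (f : R -> R) (x l : R) : is_derive f x l -> continuity_pt f x.
Proof. intros H. apply continuity_pt_filterlim. apply (ex_derive_continuous f x). exists l; exact H. Qed.

Lemma D_contF (f : R -> R) (x l : R) : is_derive f x l -> filterlim f (locally x) (locally (f x)).
Proof. intros H. apply (ex_derive_continuous f x). exists l; exact H. Qed.

Definition RC (f : R -> R) := filterlim f (at_right 0) (locally (f 0)).

Lemma RC_plus f g : RC f -> RC g -> RC (fun t => f t + g t).
Proof. intros Hf Hg. unfold RC. eapply filterlim_comp_2; [exact Hf|exact Hg|].
 apply (filterlim_plus (f 0) (g 0)). Qed.

Lemma RC_mult f g : RC f -> RC g -> RC (fun t => f t * g t).
Proof. intros Hf Hg. unfold RC. eapply filterlim_comp_2; [exact Hf|exact Hg|].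
 apply (filterlim_mult (f 0) (g 0)). Qed.

Lemma RC_comp (phi : R -> R) f : RC f -> filterlim phi (locally (f 0)) (locally (phi (f 0))) ->
  RC (fun t => phi (f t)).
Proof. intros Hf Hp. unfold RC. eapply filterlim_comp; eauto. Qed.

Lemma RC_const c : RC (fun _ => c).
Proof. unfold RC. apply filterlim_const. Qed.

Lemma RC_id : RC (fun t => t).
Proof. unfold RC. apply filterlim_locally. intros eps. exists eps. intros y Hy _. exact Hy. Qed.

Lemma mono0 (f df : R -> R) :
  (forall t, 0 < t -> is_derive f t (df t)) -> (forall t, 0 < t -> df t <= 0) ->
  RC f -> forall t, 0 <= t -> f t <= f 0.
Proof.
  intros Hd Hn Hc t Ht.
  assert (Hst : forall s, 0 < s <= t -> f t <= f s).
  { intros s [Hs1 Hs2]. destruct (Req_dec s t) as [->|Hne]; [lra|].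
    destruct (MVT_gen f s t df) as [c [Hc1 Hc2]].
    - intros x Hx. apply Hd. rewrite Rmin_left in Hx by lra. lra.
    - intros x Hx. apply (D_cont f x (df x)). apply Hd. rewrite Rmin_left in Hx by lra. lra.
    - rewrite Rmin_left in Hc1 by lra. rewrite Rmax_right in Hc1 by lra.
      assert (df c <= 0) by (apply Hn; lra). nra. }
  destruct (Req_dec t 0) as [->|Htn]; [lra|].
  destruct (Rle_or_lt (f t) (f 0)) as [H|H]; [exact H|exfalso].
  unfold RC in Hc. pose proof (proj1 (filterlim_locally (F:=at_right 0) f (f 0)) Hc) as Hc2. clear Hc; rename Hc2 into Hc.
  assert (He : 0 < (f t - f 0)/2) by lra.
  destruct (Hc (mkposreal _ He)) as [d Hdl].
  set (s := Rmin (d/2) t).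
  assert (Hs0 : 0 < s). { unfold s. apply Rmin_glb_lt; [destruct d; simpl; lra | lra]. }
  assert (Hb : ball 0 d s).
  { unfold s. change (Rabs (s - 0) < d). rewrite Rminus_0_r, Rabs_pos_eq by lra.
    unfold s. eapply Rle_lt_trans; [apply Rmin_l|]. destruct d; simpl; lra. }
  specialize (Hdl s Hb Hs0). change (Rabs (f s - f 0) < (f t - f 0)/2) in Hdl.
  apply Rabs_def2 in Hdl. assert (f t <= f s) by (apply Hst; split; [lra|unfold s; apply Rmin_r]).
  lra.
Qed.
Definition dd (x y : R) := (x - y)^2.
Definition SS (be : R -> R) a b c := 2*(be (dd a b) + be (dd b c) + be (dd a c)).
Definition F0 (be g : R -> R) a b c :=
  4*((1/6 - be (dd a b)/SS be a b c) * (a - b) * g (dd a b)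
   + (1/6 - be (dd a c)/SS be a b c) * (a - c) * g (dd a c)).

Lemma symq a b : (b - a) * ((b - a) * 1) = (a - b) * ((a - b) * 1).
Proof. ring. Qed.

Ltac fixsym y := rewrite ?(symq (y 0%nat) (y 1%nat)), ?(symq (y 0%nat) (y 2%nat)), ?(symq (y 1%nat) (y 2%nat)).

Lemma dd_sym a b : dd a b = dd b a.
Proof. unfold dd; ring. Qed.
Lemma SS_12 be a b c : SS be b a c = SS be a b c.
Proof. unfold SS. rewrite (dd_sym b a), (dd_sym b c), (dd_sym a c). ring. Qed.
Lemma SS_rot be a b c : SS be c a b = SS be a b c.
Proof. unfold SS. rewrite (dd_sym c a), (dd_sym c b). ring. Qed.

Lemma sp3 be y : sum_pairs 3 (fun k l => be ((y k - y l)^2)) = SS be (y 0%nat) (y 1%nat) (y 2%nat).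
Proof. unfold sum_pairs, SS, dd. simpl. fixsym y. ring. Qed.

Lemma rhs0 be y : flow_rhs be (fun _ _ => 1/6) 3 y 0 =
  F0 be (dlogbeta be) (y 0%nat) (y 1%nat) (y 2%nat).
Proof.
  unfold flow_rhs, sum_ne, qij, F0. rewrite sp3. unfold SS, dd. simpl. fixsym y. ring.
Qed.

Lemma rhs1 be y : flow_rhs be (fun _ _ => 1/6) 3 y 1 =
  F0 be (dlogbeta be) (y 1%nat) (y 0%nat) (y 2%nat).
Proof.
  unfold flow_rhs, sum_ne, qij, F0. rewrite SS_12. rewrite sp3. unfold SS, dd. simpl. fixsym y. ring.
Qed.
Lemma rhs2 be y : flow_rhs be (fun _ _ => 1/6) 3 y 2 =
  F0 be (dlogbeta be) (y 2%nat) (y 0%nat) (y 1%nat).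
Proof.
  unfold flow_rhs, sum_ne, qij, F0. rewrite SS_rot. rewrite sp3. unfold SS, dd. simpl. fixsym y. ring.
Qed.

Lemma const0 (f df : R -> R) :
  (forall t, 0 < t -> is_derive f t (df t)) -> (forall t, 0 < t -> df t = 0) ->
  RC f -> forall t, 0 <= t -> f t = f 0.
Proof.
  intros Hd Hz Hc t Ht.
  assert (H1 := mono0 f df Hd (fun t H => Req_le _ _ (Hz t H)) Hc t Ht).
  assert (H2 := mono0 (fun s => - f s) (fun s => - df s)
     (fun s H => D_opp f s (df s) (Hd s H)) (fun s H => ltac:(simpl; rewrite (Hz s H); lra))
     (RC_comp Ropp f Hc (D_contF Ropp (f 0) (-1) (D_eq _ _ _ _ (D_opp _ _ _ (D_id _)) eq_refl))) t Ht).
  simpl in H2. lra.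
Qed.

Lemma sum_zero be g a b c : F0 be g a b c + F0 be g b a c + F0 be g c a b = 0.
Proof.
  unfold F0. rewrite (SS_12 be a b c), (SS_rot be a b c). rewrite (dd_sym b a), (dd_sym c a), (dd_sym c b). ring.
Qed.

Lemma dd_nn a b : 0 <= dd a b.
Proof. unfold dd. apply pow2_ge_0. Qed.

Lemma E_neg be g a b c :
  (forall x, 0 <= x -> 0 < be x) ->
  (forall x y, 0 <= x -> 0 <= y -> 0 <= (be x - be y)*(x*g x - y*g y)) ->
  a * F0 be g a b c + b * F0 be g b a c + c * F0 be g c a b <= 0.
Proof.
  intros Hp Hc. unfold F0. rewrite (SS_12 be a b c), (SS_rot be a b c). rewrite (dd_sym b a), (dd_sym c a), (dd_sym c b).
  assert (P1 := Hp _ (dd_nn a b)). assert (P2 := Hp _ (dd_nn b c)). assert (P3 := Hp _ (dd_nn a c)).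
  assert (C12 := Hc _ _ (dd_nn a b) (dd_nn b c)).
  assert (C13 := Hc _ _ (dd_nn a b) (dd_nn a c)).
  assert (C23 := Hc _ _ (dd_nn b c) (dd_nn a c)).
  unfold SS in *.
  set (B1 := be (dd a b)) in *. set (B2 := be (dd b c)) in *. set (B3 := be (dd a c)) in *.
  set (G1 := g (dd a b)) in *. set (G2 := g (dd b c)) in *. set (G3 := g (dd a c)) in *.
  assert (E1 : dd a b = (a-b)*(a-b)) by (unfold dd; ring).
  assert (E2 : dd b c = (b-c)*(b-c)) by (unfold dd; ring).
  assert (E3 : dd a c = (a-c)*(a-c)) by (unfold dd; ring).
  rewrite E1, E2, E3 in *.
  set (S := 2 * (B1 + B2 + B3)).
  assert (HS : 0 < S) by (unfold S; lra).
  match goal with |- ?L <= 0 => assert (HE : L = - (4 / (3 * S)) *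
     ((B1 - B2) * ((a-b)*(a-b)*G1 - (b-c)*(b-c)*G2) + (B1 - B3) * ((a-b)*(a-b)*G1 - (a-c)*(a-c)*G3)
      + (B2 - B3) * ((b-c)*(b-c)*G2 - (a-c)*(a-c)*G3))) end.
  { unfold S. field. lra. }
  rewrite HE. assert (0 < 4/(3*S)) by (apply Rdiv_lt_0_compat; lra). nra.
Qed.

Lemma abs_le2 x : x^2 <= 4 -> Rabs x <= 2.
Proof. intros H. unfold Rabs; destruct (Rcase_abs x); nra. Qed.

Lemma b_bound be g a b c L1 L2 bm :
  (forall x, 0 <= x -> 0 < be x) -> 0 < bm -> (forall x, 0 <= x <= 4 -> bm <= be x) ->
  0 <= L1 -> 0 <= L2 ->
  (forall x y, Rabs x <= 2 -> Rabs y <= 2 -> Rabs (x * g (x^2) - y * g (y^2)) <= L1 * Rabs (x - y)) ->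
  (forall x y, Rabs x <= 2 -> Rabs y <= 2 ->
     Rabs (x * be (x^2) * g (x^2) - y * be (y^2) * g (y^2)) <= L2 * Rabs (x - y)) ->
  a + b + c = 0 -> a^2 + b^2 + c^2 <= 2 ->
  b * F0 be g b a c <= 12 * (L1/6 + L2/(6*bm)) * b^2.
Proof.
  intros Hp Hbm Hlow HL1 HL2 Hl1 Hl2 Hs HE.
  unfold F0, SS.
  assert (Hu : Rabs (b - a) <= 2) by (apply abs_le2; nra).
  assert (Hw : Rabs (b - c) <= 2) by (apply abs_le2; nra).
  assert (Hnu : Rabs (-(b - a)) <= 2) by (rewrite Rabs_Ropp; exact Hu).
  assert (K1 := Hl1 _ _ Hw Hnu). assert (K2 := Hl2 _ _ Hw Hnu).
  replace (b - c - - (b - a)) with (3 * b) in K1, K2 by lra.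
  replace ((- (b - a))^2) with ((b-a)^2) in K1, K2 by ring.
  rewrite Rabs_mult, (Rabs_pos_eq 3) in K1, K2 by lra.
  assert (D1 : 0 <= dd b a <= 4) by (unfold dd; split; [apply pow2_ge_0| nra]).
  assert (D2 : 0 <= dd b c <= 4) by (unfold dd; split; [apply pow2_ge_0| nra]).
  assert (D3 : 0 <= dd a c <= 4) by (unfold dd; split; [apply pow2_ge_0| nra]).
  assert (B1 := Hlow _ D1). assert (B2 := Hlow _ D2). assert (B3 := Hlow _ D3).
  unfold dd in *.
  set (S := 2 * (be ((b - a) ^ 2) + be ((a - c) ^ 2) + be ((b - c) ^ 2))).
  assert (HS : 6 * bm <= S) by (unfold S; lra).
  set (P := b - c) in *. set (Q := b - a) in *.
  set (gP := g (P^2)) in *. set (gQ := g (Q^2)) in *. set (bP := be (P^2)) in *. set (bQ := be (Q^2)) in *.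
  set (X1 := P * gP - - Q * gQ) in *. set (X2 := P * bP * gP - - Q * bQ * gQ) in *.
  assert (HE2 : 4 * ((1 / 6 - bQ / S) * Q * gQ + (1 / 6 - bP / S) * P * gP) = 4 * (X1 / 6 - X2 / S)).
  { unfold X1, X2. field. lra. }
  rewrite HE2.
  assert (HX : Rabs (X1/6 - X2/S) <= (L1/6 + L2/(6*bm)) * (3 * Rabs b)).
  { eapply Rle_trans. apply Rabs_triang. rewrite Rabs_Ropp.
    unfold Rdiv. rewrite !Rabs_mult, (Rabs_pos_eq (/6)), (Rabs_pos_eq (/S)) by (apply Rlt_le, Rinv_0_lt_compat; lra).
    assert (Hi : / S <= / (6 * bm)) by (apply Rinv_le_contravar; lra).
    assert (0 <= Rabs X2) by apply Rabs_pos. assert (0 < /S) by (apply Rinv_0_lt_compat; lra).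
    assert (Rabs X2 * / S <= L2 * (3 * Rabs b) * / (6*bm)).
    { apply Rmult_le_compat; auto; lra. }
    nra. }
  assert (Hb2 : b^2 = Rabs b * Rabs b) by (rewrite <- Rabs_mult; rewrite Rabs_pos_eq by nra; ring).
  assert (Hm : b * (4 * (X1 / 6 - X2 / S)) <= 4 * Rabs b * Rabs (X1/6 - X2/S)).
  { assert (b * (X1/6 - X2/S) <= Rabs (b * (X1/6 - X2/S))) by apply Rle_abs.
    rewrite Rabs_mult in H. lra. }
  assert (0 <= Rabs b) by apply Rabs_pos.
  rewrite Hb2. nra.
Qed.

Definition RR (be g : R -> R) x := (be (4*x) - be x) * (g x - 4 * g (4*x)) / (2 * be x + be (4*x)).

Lemma F0_sym be g a : (forall x, 0 <= x -> 0 < be x) ->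
  F0 be g a 0 (-a) = (2/3) * a * RR be g (a^2).
Proof.
  intros Hp. unfold F0, SS, RR, dd.
  replace ((a - 0)^2) with (a^2) by ring. replace ((0 - - a)^2) with (a^2) by ring.
  replace ((a - - a)^2) with (4 * a^2) by ring.
  assert (0 < be (a^2)) by (apply Hp; apply pow2_ge_0).
  assert (0 < be (4*a^2)) by (apply Hp; assert (0 <= a^2) by apply pow2_ge_0; lra).
  field. lra.
Qed.

Lemma D_minsq x : is_derive (fun y => Rmin y 0 ^ 2) x (2 * Rmin x 0).
Proof.
  apply is_derive_Reals. intros eps Heps. exists (mkposreal eps Heps).
  intros h Hh0 Hh. simpl in Hh.
  assert (Hb : Rabs (Rmin (x+h) 0 ^ 2 - Rmin x 0 ^ 2 - 2 * Rmin x 0 * h) <= h * h).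
  { unfold Rmin; destruct (Rle_dec (x+h) 0); destruct (Rle_dec x 0);
    apply Rabs_le; split; nra. }
  replace ((Rmin (x + h) 0 ^ 2 - Rmin x 0 ^ 2) / h - 2 * Rmin x 0)
    with ((Rmin (x+h) 0 ^ 2 - Rmin x 0 ^ 2 - 2 * Rmin x 0 * h) / h) by (field; exact Hh0).
  unfold Rdiv. rewrite Rabs_mult, Rabs_inv.
  apply (Rmult_lt_reg_r (Rabs h)). apply Rabs_pos_lt; auto.
  rewrite Rmult_assoc, Rinv_l by (apply Rabs_no_R0; auto).
  assert (h * h = Rabs h * Rabs h) by (rewrite <- Rabs_mult; rewrite Rabs_pos_eq by nra; ring).
  assert (0 < Rabs h) by (apply Rabs_pos_lt; auto). nra.
Qed.

Lemma D_lin k x : is_derive (fun s => k * s) x k.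
Proof. eapply D_eq. apply D_mult; [apply D_const | apply D_id]. cbv beta. ring. Qed.

Lemma D_expl k x : is_derive (fun s => exp (k * s)) x (k * exp (k * x)).
Proof. apply (D_comp exp (fun s => k * s)). apply D_exp. apply D_lin. Qed.

Lemma RC_expl k : RC (fun s => exp (k * s)).
Proof. apply (RC_comp exp (fun s => k * s)). apply RC_mult; [apply RC_const|apply RC_id].
  apply (D_contF exp _ _ (D_exp _)). Qed.

Lemma max_upto_ge (f : nat -> R) m : 0 <= f 0%nat -> 0 <= max_upto f m.
Proof. intros H; induction m; simpl; auto. eapply Rle_trans; [exact IHm| apply Rmax_l]. Qed.

Theorem core be g (Y : R -> nat -> R) bm L1 L2 c0 K0 :
  (forall x, 0 <= x -> 0 < be x) ->
  (forall x y, 0 <= x -> 0 <= y -> 0 <= (be x - be y)*(x*g x - y*g y)) ->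
  0 < bm -> (forall x, 0 <= x <= 4 -> bm <= be x) ->
  0 <= L1 -> 0 <= L2 ->
  (forall x y, Rabs x <= 2 -> Rabs y <= 2 -> Rabs (x * g (x^2) - y * g (y^2)) <= L1 * Rabs (x - y)) ->
  (forall x y, Rabs x <= 2 -> Rabs y <= 2 ->
     Rabs (x * be (x^2) * g (x^2) - y * be (y^2) * g (y^2)) <= L2 * Rabs (x - y)) ->
  0 < c0 -> (forall x, 0 <= x <= 1 -> - K0 <= RR be g x <= - c0 * x) ->
  (forall t, 0 < t -> is_derive (fun s => Y s 0%nat) t (F0 be g (Y t 0%nat) (Y t 1%nat) (Y t 2%nat))) ->
  (forall t, 0 < t -> is_derive (fun s => Y s 1%nat) t (F0 be g (Y t 1%nat) (Y t 0%nat) (Y t 2%nat))) ->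
  (forall t, 0 < t -> is_derive (fun s => Y s 2%nat) t (F0 be g (Y t 2%nat) (Y t 0%nat) (Y t 1%nat))) ->
  RC (fun s => Y s 0%nat) -> RC (fun s => Y s 1%nat) -> RC (fun s => Y s 2%nat) ->
  Y 0 0%nat = 1 -> Y 0 1%nat = 0 -> Y 0 2%nat = -1 ->
  (exists X : R -> R, forall t, 0 <= t ->
      Y t 0%nat = X t /\ Y t 1%nat = 0 /\ Y t 2%nat = - X t /\ 0 <= X t <= 1) /\
  (exists C : R, forall t, 0 < t -> diam 3 (Y t) <= C / sqrt t) /\
  is_lim (fun t => diam 3 (Y t)) p_infty 0.
Proof.
  intros Hp Hch Hbm Hlow HL1 HL2 Hl1 Hl2 Hc0 HR Da Db Dcc Ra Rb Rc Y0 Y1 Y2.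
  set (a := fun s => Y s 0%nat) in *. set (b := fun s => Y s 1%nat) in *. set (c := fun s => Y s 2%nat) in *.
  change (Y 0 0%nat) with (a 0) in Y0. change (Y 0 1%nat) with (b 0) in Y1. change (Y 0 2%nat) with (c 0) in Y2.
  assert (Hs : forall t, 0 <= t -> a t + b t + c t = 0).
  { intros t Ht.
    assert (H := const0 (fun s => a s + b s + c s)
      (fun t => F0 be g (a t) (b t) (c t) + F0 be g (b t) (a t) (c t) + F0 be g (c t) (a t) (b t))).
    cbv beta in H. rewrite H; [lra| | | |exact Ht].
    - intros s Hs1. apply D_plus; [apply D_plus|]; auto.
    - intros s _. apply sum_zero.
    - apply RC_plus; [apply RC_plus|]; auto. }
  assert (HE : forall t, 0 <= t -> a t ^ 2 + b t ^ 2 + c t ^ 2 <= 2).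
  { intros t Ht.
    assert (H := mono0 (fun s => a s * a s + b s * b s + c s * c s)
      (fun t => 2 * (a t * F0 be g (a t) (b t) (c t) + b t * F0 be g (b t) (a t) (c t) + c t * F0 be g (c t) (a t) (b t)))).
    cbv beta in H. rewrite Y0, Y1, Y2 in H.
    assert (a t * a t + b t * b t + c t * c t <= 1 * 1 + 0 * 0 + -1 * -1).
    { apply H; [| | |exact Ht].
      - intros s Hs1. eapply D_eq. apply D_plus; [apply D_plus|]; apply D_mult; auto. unfold a, b, c; cbv beta; ring.
      - intros s _. assert (HH := E_neg be g (a s) (b s) (c s) Hp Hch). lra.
      - unfold RC. apply RC_plus; [apply RC_plus|]; apply RC_mult; auto. }
    simpl. lra. }
  set (K := 12 * (L1/6 + L2/(6*bm))).
  assert (Hb0 : forall t, 0 <= t -> b t = 0).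
  { intros t Ht.
    assert (H := mono0 (fun s => b s * b s * exp (- (2 * K) * s))
      (fun t => (2 * (b t * F0 be g (b t) (a t) (c t)) - 2 * K * (b t * b t)) * exp (- (2 * K) * t))).
    cbv beta in H. rewrite Y1 in H.
    assert (b t * b t * exp (- (2 * K) * t) <= 0 * 0 * exp (- (2 * K) * 0)).
    { apply H; [| | |exact Ht].
      - intros s Hs1. eapply D_eq. apply D_mult; [apply D_mult; auto|apply D_expl]. unfold a, b, c; cbv beta; ring.
      - intros s Hs0. assert (HB := b_bound be g (a s) (b s) (c s) L1 L2 bm Hp Hbm Hlow HL1 HL2 Hl1 Hl2
          (Hs s (Rlt_le _ _ Hs0)) (HE s (Rlt_le _ _ Hs0))).
        fold K in HB. replace (b s ^ 2) with (b s * b s) in HB by ring. assert (0 < exp (- (2 * K) * s)) by apply exp_pos.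
        assert (2 * (b s * F0 be g (b s) (a s) (c s)) - 2 * K * (b s * b s) <= 0) by lra. nra.
      - unfold RC. apply RC_mult; [apply RC_mult; auto|apply RC_expl]. }
    assert (Hex : 0 < exp (- (2 * K) * t)) by apply exp_pos. replace (0 * 0 * exp (- (2 * K) * 0)) with 0 in H0 by ring.
    assert (b t * b t <= 0). { apply (Rmult_le_reg_r (exp (- (2 * K) * t))); [exact Hex| lra]. } nra. }
  assert (Hc : forall t, 0 <= t -> c t = - a t).
  { intros t Ht. assert (H1 := Hs t Ht). rewrite (Hb0 t Ht) in H1. lra. }
  assert (Hda : forall t, 0 < t -> is_derive a t ((2/3) * a t * RR be g (a t ^ 2))).
  { intros t Ht. eapply D_eq. apply Da; auto.
    change (Y t 1%nat) with (b t). change (Y t 2%nat) with (c t).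
    rewrite (Hb0 t (Rlt_le _ _ Ht)), (Hc t (Rlt_le _ _ Ht)). apply F0_sym; auto. }
  assert (Ha1 : forall t, 0 <= t -> a t ^ 2 <= 1).
  { intros t Ht. assert (H1 := HE t Ht). rewrite (Hb0 t Ht), (Hc t Ht) in H1. nra. }
  assert (HRt : forall t, 0 <= t -> - K0 <= RR be g (a t ^ 2) <= - c0 * a t ^ 2).
  { intros t Ht. apply HR. split; [apply pow2_ge_0| apply Ha1; auto]. }
  assert (Hapos : forall t, 0 <= t -> 0 <= a t).
  { intros t Ht.
    assert (H := mono0 (fun s => Rmin (a s) 0 ^ 2)
      (fun t => (2/3) * a t * RR be g (a t ^ 2) * (2 * Rmin (a t) 0))).
    cbv beta in H. rewrite Y0 in H.
    assert (Rmin (a t) 0 ^ 2 <= Rmin 1 0 ^ 2).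
    { apply H; [| | |exact Ht].
      - intros s Hs0. apply (D_comp (fun y => Rmin y 0 ^ 2) a). apply D_minsq. auto.
      - intros s Hs0. cbv beta. assert (HH := HRt s (Rlt_le _ _ Hs0)).
        assert (0 <= a s * Rmin (a s) 0) by (unfold Rmin; destruct (Rle_dec (a s) 0); nra).
        assert (0 <= a s ^ 2) by apply pow2_ge_0. assert (RR be g (a s ^ 2) <= 0) by nra.
        replace ((2/3) * a s * RR be g (a s ^ 2) * (2 * Rmin (a s) 0)) with ((4/3) * (a s * Rmin (a s) 0) * RR be g (a s ^ 2)) by field. nra.
      - unfold RC. apply (RC_comp (fun y => Rmin y 0 ^ 2) a); auto.
        apply (D_contF _ _ _ (D_minsq _)). }
    rewrite (Rmin_right 1 0) in H0 by lra. simpl in H0.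
    unfold Rmin in H0; destruct (Rle_dec (a t) 0); nra. }
  set (k := (4/3) * K0).
  assert (Hapos2 : forall t, 0 <= t -> 0 < a t).
  { intros t Ht.
    assert (H := mono0 (fun s => - (a s * a s) * exp (k * s))
      (fun t => - ((4/3) * (a t * a t) * (RR be g (a t ^ 2) + K0)) * exp (k * t))).
    cbv beta in H. rewrite Y0 in H.
    assert (- (a t * a t) * exp (k * t) <= - (1 * 1) * exp (k * 0)).
    { apply H; [| | |exact Ht].
      - intros s Hs0. eapply D_eq. apply D_mult; [apply D_opp, D_mult; apply Hda; auto|apply D_expl].
        unfold k; cbv beta; field.
      - intros s Hs0. assert (HH := HRt s (Rlt_le _ _ Hs0)). assert (0 < exp (k * s)) by apply exp_pos.
        cbv beta. assert (0 <= a s * a s) by nra. assert (0 <= (4/3) * (a s * a s) * (RR be g (a s ^ 2) + K0)).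
        { apply Rmult_le_pos; [|lra]. apply Rmult_le_pos; lra. } nra.
      - unfold RC. apply RC_mult; [|apply RC_expl].
        apply (RC_comp Ropp (fun s => a s * a s)). apply RC_mult; auto.
        apply (D_contF _ _ _ (D_opp _ _ _ (D_id _))). }
    rewrite Rmult_0_r, exp_0 in H0. assert (0 < exp (k * t)) by apply exp_pos.
    assert (HH := Hapos t Ht). destruct (Req_dec (a t) 0) as [E|E]; [rewrite E in H0; nra| lra]. }
  assert (Hdec : forall t, 0 <= t -> 1 + (4/3) * c0 * t <= / (a t * a t)).
  { intros t Ht.
    assert (H := mono0 (fun s => - / (a s * a s) + (4/3) * c0 * s)
      (fun t => (4/3) * ((RR be g (a t ^ 2) + c0 * a t ^ 2) / (a t * a t)))).
    cbv beta in H. rewrite Y0 in H.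
    assert (- / (a t * a t) + (4/3) * c0 * t <= - / (1 * 1) + (4/3) * c0 * 0).
    { apply H; [| | |exact Ht].
      - intros s Hs0. assert (Hs1 := Hapos2 s (Rlt_le _ _ Hs0)). eapply D_eq.
        apply D_plus; [apply D_opp, D_inv; [apply D_mult; apply Hda; auto| nra]|apply D_lin].
        cbv beta. field. lra.
      - intros s Hs0. assert (HH := HRt s (Rlt_le _ _ Hs0)). assert (Hs1 := Hapos2 s (Rlt_le _ _ Hs0)).
        assert (0 < a s * a s) by nra.
        assert (RR be g (a s ^ 2) + c0 * a s ^ 2 <= 0) by lra.
        assert ((RR be g (a s ^ 2) + c0 * a s ^ 2) / (a s * a s) <= 0).
        { unfold Rdiv. assert (0 < / (a s * a s)) by (apply Rinv_0_lt_compat; lra). nra. }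
        lra.
      - unfold RC. apply RC_plus; [|apply RC_mult; [apply RC_const|apply RC_id]].
        apply (RC_comp (fun y => - / y) (fun s => a s * a s)). apply RC_mult; auto.
        rewrite Y0. apply (D_contF (fun y => - / y) (1*1) (- (- 1 / (1*1)^2))). apply (D_opp (fun y => / y)). apply (D_inv (fun y => y) (1*1) 1). apply D_id. lra. }
    replace (/ (1*1)) with 1 in H0 by field. lra. }
  assert (Hsq : forall t, 0 < t -> (2 * a t) ^ 2 <= 3 / (c0 * t)).
  { intros t Ht. assert (H1 := Hdec t (Rlt_le _ _ Ht)). assert (H2 := Hapos2 t (Rlt_le _ _ Ht)).
    assert (0 < a t * a t) by nra.
    assert (H3 : a t * a t * (1 + (4/3)*c0*t) <= 1).
    { replace 1 with (a t * a t * / (a t * a t)) at 2 by (field; lra). apply Rmult_le_compat_l; lra. }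
    apply (Rmult_le_reg_r (c0 * t)). nra. replace (3 / (c0 * t) * (c0 * t)) with 3 by (field; nra). nra. }
  assert (Hdiam : forall t, 0 <= t -> 0 <= diam 3 (Y t) <= 2 * a t).
  { intros t Ht. split.
    - unfold diam. apply max_upto_ge. apply max_upto_ge. apply Rabs_pos.
    - assert (E1 := Hb0 t Ht). assert (E2 := Hc t Ht). assert (E3 := Hapos t Ht).
      unfold b, c, a in *. unfold diam. simpl. rewrite E1, E2.
      repeat apply Rmax_lub; apply Rabs_le; lra. }
  split; [|split].
  - exists a. intros t Ht. split; [reflexivity|]. split; [apply (Hb0 t Ht)|]. split; [apply (Hc t Ht)|]. split; [apply (Hapos t Ht)|].
    assert (H1 := Ha1 t Ht). assert (H2 := Hapos t Ht). nra.
  - exists (sqrt (3 / c0)). intros t Ht.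
    eapply Rle_trans; [apply Hdiam; lra|].
    rewrite <- sqrt_div_alt by lra.
    assert (H2 := Hapos t (Rlt_le _ _ Ht)).
    rewrite <- (sqrt_pow2 (2 * a t)) by lra. apply sqrt_le_1_alt.
    replace (3 / c0 / t) with (3 / (c0 * t)) by (field; lra). apply Hsq; auto.
  - apply is_lim_spec. intros eps. simpl.
    exists (3 / (c0 * eps * eps)). intros t Ht.
    assert (He : 0 < eps) by apply cond_pos.
    assert (Hce : 0 < c0 * eps * eps) by (apply Rmult_lt_0_compat; [apply Rmult_lt_0_compat|]; lra).
    assert (Hm : 0 < 3 / (c0 * eps * eps)) by (apply Rdiv_lt_0_compat; lra).
    assert (Ht0 : 0 < t) by lra.
    assert (H1 := Hdiam t (Rlt_le _ _ Ht0)). assert (H2 := Hsq t Ht0).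
    assert (H3 : 3 / (c0 * t) < eps * eps).
    { apply (Rmult_lt_reg_r (c0 * t)). nra. replace (3 / (c0 * t) * (c0 * t)) with 3 by (field; nra).
      apply (Rmult_lt_reg_r (/ (c0 * eps * eps))). apply Rinv_0_lt_compat; nra.
      replace (eps * eps * (c0 * t) * / (c0 * eps * eps)) with t by (field; nra). lra. }
    rewrite Rminus_0_r, Rabs_pos_eq by lra.
    assert (2 * a t < eps) by nra. lra.
Qed.

Lemma exp_mono x y : x <= y -> exp x <= exp y.
Proof. intros H. destruct (Rle_lt_or_eq_dec _ _ H) as [H1|H1]; [left; apply exp_increasing; auto| subst; lra]. Qed.

Lemma lip_helper x y k d M : Rabs k <= M -> 1 <= d -> Rabs ((x - y) * k / d) <= M * Rabs (x - y).
Proof.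
  intros Hk Hd. unfold Rdiv. rewrite !Rabs_mult, (Rabs_pos_eq (/d)) by (apply Rlt_le, Rinv_0_lt_compat; lra).
  assert (/ d <= 1). { rewrite <- Rinv_1. apply Rinv_le_contravar; lra. }
  assert (0 < / d) by (apply Rinv_0_lt_compat; lra).
  assert (0 <= Rabs (x - y)) by apply Rabs_pos. assert (0 <= Rabs k) by apply Rabs_pos.
  assert (Rabs k * / d <= M) by nra.
  replace (Rabs (x - y) * Rabs k * / d) with (Rabs (x - y) * (Rabs k * / d)) by ring.
  rewrite (Rmult_comm M). apply Rmult_le_compat_l; auto.
Qed.

Lemma dlog_exp x : dlogbeta (fun x => exp (- x)) x = -1.
Proof.
  unfold dlogbeta. apply is_derive_unique.
  apply (is_derive_ext (fun u => - u)). intros u. rewrite ln_exp. reflexivity.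
  apply (D_opp (fun u => u)). apply D_id.
Qed.

Lemma absle x M : -M <= x <= M -> Rabs x <= M.
Proof. intros. apply Rabs_le. lra. Qed.

Lemma lip_exp2 x y : Rabs x <= 2 -> Rabs y <= 2 ->
  Rabs (x * exp (- x^2) * -1 - y * exp (- y^2) * -1) <= 9 * Rabs (x - y).
Proof.
  intros Hx Hy.
  set (h := fun u => u * exp (- u^2)).
  set (dh := fun u => (1 - 2 * u^2) * exp (- u^2)).
  assert (Hd : forall u, is_derive h u (dh u)).
  { intros u. unfold h, dh. auto_derive. auto. simpl. ring. }
  destruct (MVT_gen h y x dh) as [cc [Hc1 Hc2]].
  - intros; apply Hd.
  - intros; apply (D_cont h _ _ (Hd _)).
  - replace (x * exp (- x^2) * -1 - y * exp (- y^2) * -1) with (- (h x - h y)) by (unfold h; ring).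
    rewrite Rabs_Ropp, Hc2, Rabs_mult.
    assert (Hcc : Rabs cc <= 2).
    { apply Rabs_le. apply Rabs_le_between in Hx. apply Rabs_le_between in Hy.
      assert (Rmin y x <= cc <= Rmax y x) by exact Hc1.
      unfold Rmin, Rmax in H; destruct (Rle_dec y x); lra. }
    assert (Rabs (dh cc) <= 9).
    { unfold dh. rewrite Rabs_mult, (Rabs_pos_eq (exp _)) by (apply Rlt_le, exp_pos).
      assert (exp (- cc^2) <= 1). { rewrite <- exp_0. apply exp_mono. assert (0 <= cc^2) by apply pow2_ge_0. lra. }
      assert (0 < exp (- cc^2)) by apply exp_pos.
      assert (cc^2 <= 4). { apply Rabs_le_between in Hcc. nra. }
      assert (Rabs (1 - 2 * cc^2) <= 9). { apply Rabs_le. assert (0 <= cc^2) by apply pow2_ge_0. lra. }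
      assert (0 <= Rabs (1 - 2 * cc^2)) by apply Rabs_pos. nra. }
    assert (0 <= Rabs (x - y)) by apply Rabs_pos. nra.
Qed.

Lemma flow_hyps be (Y : R -> nat -> R) : is_flow_solution be (fun _ _ => 1/6) 3 Y ->
  (forall t, 0 < t -> is_derive (fun s => Y s 0%nat) t (F0 be (dlogbeta be) (Y t 0%nat) (Y t 1%nat) (Y t 2%nat))) /\
  (forall t, 0 < t -> is_derive (fun s => Y s 1%nat) t (F0 be (dlogbeta be) (Y t 1%nat) (Y t 0%nat) (Y t 2%nat))) /\
  (forall t, 0 < t -> is_derive (fun s => Y s 2%nat) t (F0 be (dlogbeta be) (Y t 2%nat) (Y t 0%nat) (Y t 1%nat))) /\
  RC (fun s => Y s 0%nat) /\ RC (fun s => Y s 1%nat) /\ RC (fun s => Y s 2%nat).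
Proof.
  intros H.
  destruct (H 0%nat ltac:(lia)) as [D0 R0]. destruct (H 1%nat ltac:(lia)) as [D1 R1].
  destruct (H 2%nat ltac:(lia)) as [D2 R2].
  split; [intros; rewrite <- rhs0; auto|].
  split; [intros; rewrite <- rhs1; auto|].
  split; [intros; rewrite <- rhs2; auto|].
  split; [exact R0|]. split; [exact R1| exact R2].
Qed.

Theorem inst_exp (Y : R -> nat -> R) :
  is_flow_solution (fun x => exp (- x)) (fun _ _ => 1 / 6) 3 Y ->
  Y 0 0%nat = 1 -> Y 0 1%nat = 0 -> Y 0 2%nat = -1 ->
  (exists X : R -> R, forall t, 0 <= t ->
      Y t 0%nat = X t /\ Y t 1%nat = 0 /\ Y t 2%nat = - X t /\ 0 <= X t <= 1) /\
  (exists C : R, forall t, 0 < t -> diam 3 (Y t) <= C / sqrt t) /\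
  is_lim (fun t => diam 3 (Y t)) p_infty 0.
Proof.
  intros H Y0 Y1 Y2. destruct (flow_hyps _ _ H) as [Da [Db [Dc [Ra [Rb Rc]]]]].
  apply (core (fun x => exp (- x)) (dlogbeta (fun x => exp (- x))) Y (exp (-4)) 1 9 (3/4) (3/2)); auto; try lra.
  - intros x _. apply exp_pos.
  - intros x y Hx Hy. rewrite !dlog_exp.
    destruct (Rle_dec x y).
    + assert (exp (- y) <= exp (- x)) by (apply exp_mono; lra). nra.
    + assert (exp (- x) <= exp (- y)) by (apply exp_mono; lra). nra.
  - apply exp_pos.
  - intros x Hx. apply exp_mono. lra.
  - intros x y _ _. rewrite !dlog_exp.
    replace (x * -1 - y * -1) with (- (x - y)) by ring. rewrite Rabs_Ropp. lra.
  - intros x y Hx Hy. rewrite !dlog_exp. apply lip_exp2; auto.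
  - intros x Hx. unfold RR. rewrite !dlog_exp.
    assert (E4 : exp (- (4 * x)) = exp (- x) * exp (- (3 * x))) by (rewrite <- exp_plus; f_equal; ring).
    rewrite E4.
    set (z := exp (- (3 * x))). set (e := exp (- x)).
    assert (He : 0 < e) by apply exp_pos. assert (Hz : 0 < z) by apply exp_pos.
    assert (Hz1 : z * (1 + 3 * x) <= 1).
    { assert (H1 := exp_ineq1_le (3 * x)).
      assert (z * exp (3 * x) = 1) by (unfold z; rewrite <- exp_plus; replace (- (3 * x) + 3 * x) with 0 by ring; apply exp_0).
      nra. }
    replace ((e * z - e) * (-1 - 4 * -1) / (2 * e + e * z)) with (3 * (z - 1) / (2 + z)) by (assert (0 < e * z) by nra; field; repeat split; lra).
    assert (0 < 2 + z) by lra.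
    set (w := / (2 + z)). assert (Hw : w * (2 + z) = 1) by (unfold w; field; lra).
    assert (Hw0 : 0 < w) by (unfold w; apply Rinv_0_lt_compat; lra).
    replace (3 * (z - 1) / (2 + z)) with (3 - 9 * w) by (unfold w; field; lra).
    assert (HE : 0 <= 3 - 3 * z - 3 * x / 2 - 3 * x * z / 4).
    { assert (Hq : 0 <= (1 + 3 * x) * (3 - 3 * z - 3 * x / 2 - 3 * x * z / 4)) by nra.
      apply (Rmult_le_reg_l (1 + 3 * x)); lra. }
    split.
    + assert (w * z > 0) by nra. nra.
    + assert (Hm : 0 <= w * (3 - 3 * z - 3 * x / 2 - 3 * x * z / 4)) by (apply Rmult_le_pos; lra).
      nra.
Qed.

Lemma dlog_cau x : 0 <= x -> dlogbeta (fun x => / (1 + x)) x = - / (1 + x).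
Proof.
  intros Hx. unfold dlogbeta. apply is_derive_unique.
  auto_derive.
  - split; [lra|]. split; [apply Rinv_0_lt_compat; lra| auto].
  - field. lra.
Qed.

Theorem inst_cau (Y : R -> nat -> R) :
  is_flow_solution (fun x => / (1 + x)) (fun _ _ => 1 / 6) 3 Y ->
  Y 0 0%nat = 1 -> Y 0 1%nat = 0 -> Y 0 2%nat = -1 ->
  (exists X : R -> R, forall t, 0 <= t ->
      Y t 0%nat = X t /\ Y t 1%nat = 0 /\ Y t 2%nat = - X t /\ 0 <= X t <= 1) /\
  (exists C : R, forall t, 0 < t -> diam 3 (Y t) <= C / sqrt t) /\
  is_lim (fun t => diam 3 (Y t)) p_infty 0.
Proof.
  intros H Y0 Y1 Y2. destruct (flow_hyps _ _ H) as [Da [Db [Dc [Ra [Rb Rc]]]]].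
  apply (core (fun x => / (1 + x)) (dlogbeta (fun x => / (1 + x))) Y (/ 5) 5 57 (3/40) 3); auto; try lra.
  - intros x Hx. apply Rinv_0_lt_compat. lra.
  - intros x y Hx Hy. rewrite (dlog_cau x Hx), (dlog_cau y Hy).
    replace ((/ (1 + x) - / (1 + y)) * (x * - / (1 + x) - y * - / (1 + y)))
      with (((y - x) / ((1 + x) * (1 + y)))^2) by (field; lra).
    apply pow2_ge_0.
  - intros x Hx. apply Rinv_le_contravar; lra.
  - intros x y Hx Hy. rewrite (dlog_cau (x^2) (pow2_ge_0 x)), (dlog_cau (y^2) (pow2_ge_0 y)).
    apply Rabs_le_between in Hx. apply Rabs_le_between in Hy.
    assert (0 <= x^2) by apply pow2_ge_0. assert (0 <= y^2) by apply pow2_ge_0.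
    replace (x * - / (1 + x ^ 2) - y * - / (1 + y ^ 2))
      with ((x - y) * (x * y - 1) / ((1 + x^2) * (1 + y^2))) by (field; lra).
    apply lip_helper.
    + apply Rabs_le. split; nra.
    + nra.
  - intros x y Hx Hy. rewrite (dlog_cau (x^2) (pow2_ge_0 x)), (dlog_cau (y^2) (pow2_ge_0 y)).
    apply Rabs_le_between in Hx. apply Rabs_le_between in Hy.
    assert (0 <= x^2) by apply pow2_ge_0. assert (0 <= y^2) by apply pow2_ge_0.
    replace (x * / (1 + x ^ 2) * - / (1 + x ^ 2) - y * / (1 + y ^ 2) * - / (1 + y ^ 2))
      with ((x - y) * (x * y * (x^2 + x*y + y^2) + 2 * (x * y) - 1) / ((1 + x^2)^2 * (1 + y^2)^2)) by (field; lra).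
    apply lip_helper.
    + assert (Hp : -4 <= x * y <= 4) by (split; nra).
      assert (Hq : 0 <= x^2 + x*y + y^2 <= 12) by (split; nra).
      apply Rabs_le. split; nra.
    + assert (1 <= (1 + x^2)^2) by nra. assert (1 <= (1 + y^2)^2) by nra. nra.
  - intros x Hx. unfold RR.
    assert (H4 : 0 <= 4 * x) by lra.
    rewrite (dlog_cau x (proj1 Hx)), (dlog_cau (4 * x) H4).
    replace ((/ (1 + 4 * x) - / (1 + x)) * (- / (1 + x) - 4 * - / (1 + 4 * x)) / (2 * / (1 + x) + / (1 + 4 * x)))
      with (- (3 * x) * / ((1 + x) * (1 + 4 * x) * (1 + 3 * x))) by (field; lra).
    set (D := (1 + x) * (1 + 4 * x) * (1 + 3 * x)).
    assert (HD1 : 1 <= D) by (unfold D; nra). assert (HD2 : D <= 40) by (unfold D; nra).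
    set (w := / D). assert (Hw : w * D = 1) by (unfold w; field; lra).
    assert (Hw0 : 0 < w) by (unfold w; apply Rinv_0_lt_compat; lra).
    assert (w <= 1). { unfold w. rewrite <- Rinv_1. apply Rinv_le_contravar; lra. }
    assert (/ 40 <= w). { unfold w. apply Rinv_le_contravar; lra. }
    split; nra.
Qed.

Theorem mainTheorem6 (beta : R -> R) (Y : R -> nat -> R) :
  (beta = (fun x => / (1 + x)) \/ beta = (fun x => exp (- x))) ->
  is_flow_solution beta (fun _ _ => 1 / 6) 3 Y ->
  Y 0 0%nat = 1 -> Y 0 1%nat = 0 -> Y 0 2%nat = -1 ->
  (exists X : R -> R, forall t, 0 <= t ->
      Y t 0%nat = X t /\ Y t 1%nat = 0 /\ Y t 2%nat = - X t /\ 0 <= X t <= 1) /\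
  (exists C : R, forall t, 0 < t -> diam 3 (Y t) <= C / sqrt t) /\
  is_lim (fun t => diam 3 (Y t)) p_infty 0.
Proof.
  intros [-> | ->].
  - apply inst_cau.
  - apply inst_exp.
Qed.
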